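(* Let $\mathbf K$ be a commutative field, $p\ge1$, and let $T_1,\dots,T_d\in\mathrm{Rec}_{p\times p}(\mathbf K)$ be linearly independent elements spanning a recursively closed subspace, with shift matrices $\rho(s,t)\in\mathbf K^{d\times d}$ ($0\le s,t<p$) defined by $\rho(s,t)T_k=\sum_{j=1}^d\rho(s,t)_{j,k}T_j$. Then all of $T_1,\dots,T_d$ are of Toeplitz type if and only if the following two conditions hold: (1) $\rho(s,t)$ depends only on $s-t$ for $0\le s,t<p$; (2) writing $\rho(s-t)$ for $\rho(s,t)$ (so $\rho(m)$ is defined for $1-p\le m\le p-1$), one has $\rho(s+p)\rho(t)=\rho(s)\rho(t+1)$ for all $1-p\le s<0$ and $1-p\le t<p-1$.
   Context: $\mathcal M_{p\times p}^l$ is the set of pairs $(U,W)$ of words of length $l$ over $\{0,\dots,p-1\}$ and $\mathcal M_{p\times p}=\bigcup_l\mathcal M_{p\times p}^l$. Functions $A:\mathcal M_{p\times p}\to\mathbf K$ have values $A[U,W]$; shift maps act by $(\rho(S,T)A)[U,W]=A[US,WT]$; a subspace is recursively closed if invariant under all shift maps; $\mathrm{Rec}_{p\times p}(\mathbf K)$ is the set of $A$ whose span of $\{\rho(S,T)A\}$ is finite-dimensional. Words $u_1\dots u_l$ are identified with integers $\sum_j u_jp^{j-1}\in\{0,\dots,p^l-1\}$, so $A[\mathcal M_{p\times p}^l]$ is a $p^l\times p^l$ matrix; $A$ is of Toeplitz type if each such matrix is Toeplitz (entry $(u,w)$ depends only on $u-w$). Products of shift matrices are ordinary matrix products. *)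

(* Defs.v *)
From mathcomp Require Import all_boot all_order all_algebra.
Set Implicit Arguments. Unset Strict Implicit. Unset Printing Implicit Defensive.
Import Order.TTheory GRing.Theory Num.Theory.
Local Open Scope ring_scope.

(* Functions A : M_{pxp} -> K.  A pair (U,W) of words of length l over
   {0,..,p-1} is a pair of l-tuples of 'I_p; A l U W stands for A[U,W].
   The first letter of a tuple is u_1. *)
Definition Mfun (K : Type) (p : nat) :=
  forall l : nat, l.-tuple 'I_p -> l.-tuple 'I_p -> K.

Definition shiftw (K : Type) (p m : nat) (S T : m.-tuple 'I_p)
  (A : Mfun K p) : Mfun K p :=
  fun l U W => A (l + m)%N [tuple of U ++ S] [tuple of W ++ T].
Arguments shiftw {K p m} S T A : rename.

Definition shift1 (K : Type) (p : nat) (s t : 'I_p) (A : Mfun K p) : Mfun K p :=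
  fun l U W => A l.+1 [tuple of rcons U s] [tuple of rcons W t].
Arguments shift1 {K p} s t A : rename.

(* A in Rec_{pxp}(K): the span of all rho(S,T) A is finite-dimensional,
   i.e. contained in the span of finitely many functions B_0..B_{n-1}. *)
Definition isRec (K : fieldType) (p : nat) (A : Mfun K p) : Prop :=
  exists (n : nat) (B : 'I_n -> Mfun K p),
    forall (m : nat) (S T : m.-tuple 'I_p), exists c : 'I_n -> K,
      forall l U W, shiftw S T A l U W = \sum_(i < n) c i * B i l U W.

Definition wordnum (p l : nat) (U : l.-tuple 'I_p) : nat :=
  (\sum_(j < l) (tnth U j : nat) * p ^ j)%N.

(* Toeplitz type: each matrix A[M^l] is Toeplitz *)
Definition toeplitz_type (K : Type) (p : nat) (A : Mfun K p) : Prop :=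
  forall l (U W U' W' : l.-tuple 'I_p),
    (wordnum U)%:Z - (wordnum W)%:Z = (wordnum U')%:Z - (wordnum W')%:Z ->
    A l U W = A l U' W'.

Definition lin_indep (K : fieldType) (p d : nat) (T : 'I_d -> Mfun K p) : Prop :=
  forall c : 'I_d -> K,
    (forall l U W, \sum_(k < d) c k * T k l U W = 0) -> forall k, c k = 0.

(* rho(m) := rho(s,t) for some (s,t) with s - t = m (well defined when
   rho(s,t) depends only on s - t); 0 if there is none. *)
Definition rhoD (K : fieldType) (p d : nat) (rho : 'I_p -> 'I_p -> 'M[K]_d)
  (m : int) : 'M[K]_d :=
  match [pick st : 'I_p * 'I_p | (st.1 : nat)%:Z - (st.2 : nat)%:Z == m] with
  | Some st => rho st.1 st.2
  | None => 0
  end.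

(* Main.v *)
Require Import Defs.
From mathcomp Require Import all_boot all_order all_algebra zify.
Set Implicit Arguments. Unset Strict Implicit. Unset Printing Implicit Defensive.
Import Order.TTheory GRing.Theory Num.Theory.
Local Open Scope ring_scope.
Lemma dm (m q r P : int) : 0 < P -> 0 <= r < P -> m = q * P + r ->
  (m %/ P)%Z = q /\ (m %% P)%Z = r.
Proof.
move=> hP hr ->.
have hd : ((q * P + r) %/ P)%Z = q.
  rewrite divzMDl ?gt_eqF // divz_small ?addr0 //.
  by rewrite gez0_abs // ltW.
split=> //.
have := divz_eq (q * P + r) P; rewrite hd => h.
by apply: (addrI (q * P)); rewrite -h.
Qed.

Section Alg.
Variables (K : fieldType) (p d : nat) (R : int -> 'M[K]_d).
Hypothesis hp : (0 < p)%N.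
Hypothesis cond2 : forall s t : int,
      1 - (p : nat)%:Z <= s < 0 -> 1 - (p : nat)%:Z <= t < (p : nat)%:Z - 1 ->
      R (s + (p : nat)%:Z) *m R t = R s *m R (t + 1).

Let pz := (p : nat)%:Z.
Definition PP (l : nat) : int := pz ^+ l.
Definition inr l (v : int) := (1 - PP l <= v) && (v <= PP l - 1).

Fixpoint C (l : nat) (m : int) : 'M[K]_d :=
  match l with
  | 0 => 1%:M
  | l'.+1 => if inr l' (m %/ pz)%Z then R (m %% pz)%Z *m C l' (m %/ pz)%Z
             else R ((m %% pz)%Z - pz) *m C l' ((m %/ pz)%Z + 1)
  end.

Lemma c2 s t a b : 1 - pz <= s < 0 -> 1 - pz <= t < pz - 1 -> a = s + pz -> b = t + 1 ->
  R a *m R t = R s *m R b.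
Proof. by move=> h1 h2 -> ->; apply: cond2. Qed.

Lemma PP_gt0 l : 0 < PP l.
Proof. by rewrite /PP exprn_gt0 // /pz ltz_nat. Qed.

Lemma PPS l : PP l.+1 = pz * PP l.
Proof. by rewrite /PP exprS. Qed.

Lemma pz_gt0 : 0 < pz. Proof. by rewrite /pz ltz_nat. Qed.

Lemma lemL l : forall s v, 1 - pz <= s < 0 -> inr l v -> inr l (v + 1) ->
  R s *m C l (v + 1) = R (s + pz) *m C l v.
Proof.
elim: l => [|l IH] s v hs; rewrite /inr.
  by rewrite /PP !expr0; lia.
rewrite PPS => hv hv1.
have hX := PP_gt0 l. have hp0 := pz_gt0.
set X := PP l in hX hv hv1 *.
have /andP[r0 r1] : 0 <= (v %% pz)%Z < pz by rewrite modz_ge0 ?gt_eqF // ltz_pmod.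
have ev := divz_eq v pz.
set q := (v %/ pz)%Z in ev *; set r := (v %% pz)%Z in ev r0 r1 *.
have [p1|p2] : pz = 1 \/ 2 <= pz by lia.
  have X1 : X = 1 by rewrite /X /PP p1 expr1n.
  rewrite p1 X1 in hv hv1; lia.
rewrite /=.
have [hr|hr] : r < pz - 1 \/ r = pz - 1 by lia.
- have [e1 e2] : ((v + 1) %/ pz)%Z = q /\ ((v + 1) %% pz)%Z = r + 1.
    by apply: dm => //; lia.
  rewrite e1 e2 -/q -/r /inr -/X.
  case: ifP => hq.
    by rewrite !mulmxA (cond2 (s:=s) (t:=r)) //; lia.
  have hr1 : 1 <= r by move/negbT: hq; rewrite negb_and -!ltNge => /orP[] h; nia.
  rewrite !mulmxA (cond2 (s:=s) (t:=r - pz)); try lia.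
  by rewrite addrAC.
- have [e1 e2] : ((v + 1) %/ pz)%Z = q + 1 /\ ((v + 1) %% pz)%Z = 0.
    by apply: dm => //; lia.
  have hq1 : inr l (q + 1) by rewrite /inr -/X; apply/andP; split; nia.
  rewrite e1 e2 -/q -/r.
  case: ifP => [_|/negP []]; last exact: hq1.
  case: ifP => hq.
    have IHq := IH (-1) q ltac:(lia) hq hq1.
    have e : r = -1 + pz by lia.
    rewrite e -IHq.
    rewrite !mulmxA (cond2 (s:=s) (t:=-1)); try lia.
    by rewrite addNr.
  rewrite hr !mulmxA (cond2 (s:=s) (t:=pz - 1 - pz)); try lia.
  by have -> : pz - 1 - pz + 1 = 0 by lia.
Qed.

Definition Pm (x : seq int) := foldr (fun a M => R a *m M) 1%:M x.
Definition valx (x : seq int) := foldr (fun a v => a + pz * v) 0 x.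
Definition digok (a : int) := (1 - pz <= a) && (a <= pz - 1).

Lemma valx_range x : all digok x -> inr (size x) (valx x).
Proof.
elim: x => [|a x IH] /=; first by rewrite /inr /PP expr0.
case/andP=> /andP[ha1 ha2] /IH; rewrite /inr PPS.
have hX := PP_gt0 (size x). have hp0 := pz_gt0.
move=> /andP[h1 h2]; apply/andP; split; nia.
Qed.

Lemma PmC x : all digok x -> Pm x = C (size x) (valx x).
Proof.
elim: x => [|a x IH] //= /andP[/andP[ha1 ha2] hx].
rewrite IH //.
have hv := valx_range hx. have hp0 := pz_gt0.
set v := valx x in hv *; set l := size x in hv *.
have [ha|ha] : 0 <= a \/ a < 0 by lia.
  have [e1 e2] : ((a + pz * v) %/ pz)%Z = v /\ ((a + pz * v) %% pz)%Z = a.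
    by apply: dm => //; lia.
  by rewrite e1 e2 hv.
have [e1 e2] : ((a + pz * v) %/ pz)%Z = v - 1 /\ ((a + pz * v) %% pz)%Z = a + pz.
  by apply: dm => //; lia.
rewrite e1 e2; case: ifP => hq.
  have := lemL (s:=a) (v:=v - 1) ltac:(lia) hq; rewrite subrK => /(_ hv) //.
by rewrite addrK subrK.
Qed.
End Alg.
Unset Implicit Arguments.
Section Main.
Variables (K : fieldType) (p d : nat).
Hypothesis hp : (0 < p)%N.
Variable T : 'I_d -> Mfun K p.
Hypothesis hind : lin_indep T.
Variable rho : 'I_p -> 'I_p -> 'M[K]_d.
Hypothesis hrho : forall (s t : 'I_p) (k : 'I_d) l U W,
      shift1 s t (T k) l U W = \sum_(j < d) rho s t j k * T j l U W.

Lemma tuple_rcons l (U : l.+1.-tuple 'I_p) :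
  exists U' : l.-tuple 'I_p, exists s, U = [tuple of rcons U' s].
Proof.
case: U => u hu; case/lastP: u hu => [|u' s] hu; first by [].
have hu' : size u' == l by rewrite size_rcons eqSS in hu.
by exists (Tuple hu'), s; apply: val_inj.
Qed.

Lemma wordnum_rcons l (U : l.-tuple 'I_p) (s : 'I_p) :
  wordnum [tuple of rcons U s] = (wordnum U + s * p ^ l)%N.
Proof.
rewrite /wordnum big_ord_recr /=; congr (_ + _)%N.
  apply: eq_bigr => j _; rewrite !(tnth_nth s) /= nth_rcons size_tuple.
  by rewrite ltn_ord.
by rewrite (tnth_nth s) /= nth_rcons size_tuple ltnn eqxx.
Qed.

Lemma mx_eq (M1 M2 : 'M[K]_d) :
  (forall k l U W, \sum_i M1 i k * T i l U W = \sum_i M2 i k * T i l U W) ->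
  M1 = M2.
Proof.
move=> h; apply/matrixP => i k; apply/eqP; rewrite -subr_eq0; apply/eqP.
apply: (hind (fun i => M1 i k - M2 i k)) => l U W.
under eq_bigr do rewrite mulrBl.
by rewrite sumrB h subrr.
Qed.

Lemma shift2 (a1 b1 a2 b2 : 'I_p) k l (U W : l.-tuple 'I_p) :
  T k l.+2 [tuple of rcons [tuple of rcons U a1] a2]
           [tuple of rcons [tuple of rcons W b1] b2]
  = \sum_i (rho a1 b1 *m rho a2 b2) i k * T i l U W.
Proof.
have := hrho a2 b2 k l.+1 [tuple of rcons U a1] [tuple of rcons W b1]; rewrite /shift1 => ->.
under eq_bigr => j _ do
  (have := hrho a1 b1 j l U W; rewrite /shift1 => ->).
under eq_bigr do rewrite big_distrr.
rewrite exchange_big; apply: eq_bigr => i _.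
rewrite mxE big_distrl; apply: eq_bigr => j _.
by rewrite /= mulrA (mulrC (rho a2 b2 j k)).
Qed.

Lemma cond1_of (toep : forall k, toeplitz_type (T k)) (s t s' t' : 'I_p) :
  (s : nat)%:Z - (t : nat)%:Z = (s' : nat)%:Z - (t' : nat)%:Z -> rho s t = rho s' t'.
Proof.
move=> e; apply: mx_eq => k l U W.
rewrite -!hrho /shift1; apply: toep.
rewrite !wordnum_rcons !PoszD !PoszM.
set Y := Posz (p ^ l); nia.
Qed.

Lemma two_of (toep : forall k, toeplitz_type (T k)) (a1 b1 a2 b2 a3 b3 a4 b4 : 'I_p) :
  ((a1 : nat)%:Z - (b1 : nat)%:Z) + (p : nat)%:Z * ((a2 : nat)%:Z - (b2 : nat)%:Z)
  = ((a3 : nat)%:Z - (b3 : nat)%:Z) + (p : nat)%:Z * ((a4 : nat)%:Z - (b4 : nat)%:Z) ->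
  rho a1 b1 *m rho a2 b2 = rho a3 b3 *m rho a4 b4.
Proof.
move=> e; apply: mx_eq => k l U W.
rewrite -!shift2; apply: toep.
rewrite !wordnum_rcons !PoszD !PoszM expnS PoszM.
set Y := Posz (p ^ l); nia.
Qed.

Lemma PoszX (l : nat) : Posz (p ^ l)%N = (Posz p) ^+ l.
Proof. elim: l => [|l IH]; first by []. by rewrite expnS exprS PoszM IH. Qed.

Lemma rhoD_eq (h1 : forall s t s' t' : 'I_p,
      (s : nat)%:Z - (t : nat)%:Z = (s' : nat)%:Z - (t' : nat)%:Z -> rho s t = rho s' t')
  (s t : 'I_p) : rhoD rho ((s : nat)%:Z - (t : nat)%:Z) = rho s t.
Proof.
rewrite /rhoD; case: pickP => [[a b] /= /eqP hab|hn]; first exact: h1.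
by have := hn (s, t); rewrite /= eqxx.
Qed.

Lemma pair_ex (m : int) : 1 - (p : nat)%:Z <= m <= (p : nat)%:Z - 1 ->
  exists s t : 'I_p, (s : nat)%:Z - (t : nat)%:Z = m.
Proof.
case: m => n h.
  have hn : (n < p)%N by lia.
  by exists (Ordinal hn), (Ordinal hp); rewrite /= subr0.
have hn : (n.+1 < p)%N by move: h; rewrite NegzE; lia.
by exists (Ordinal hp), (Ordinal hn); rewrite /= NegzE sub0r.
Qed.

Definition dif l (U W : l.-tuple 'I_p) : seq int :=
  [seq (nat_of_ord x.1)%:Z - (nat_of_ord x.2)%:Z | x : 'I_p * 'I_p <- zip U W].
Arguments dif {l}.

Lemma dif_rcons l (U W : l.-tuple 'I_p) (s t : 'I_p) :
  dif [tuple of rcons U s] [tuple of rcons W t]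
  = rcons (dif U W) ((s : nat)%:Z - (t : nat)%:Z).
Proof. by rewrite /dif /= zip_rcons ?size_tuple // map_rcons. Qed.

Lemma size_dif l (U W : l.-tuple 'I_p) : size (dif U W) = l.
Proof. by rewrite size_map size_zip !size_tuple minnn. Qed.

Lemma dif_ok l (U W : l.-tuple 'I_p) : all (digok p) (dif U W).
Proof.
apply/allP => x /mapP [[a b] _ ->]; rewrite /digok /=.
have := ltn_ord a; have := ltn_ord b; lia.
Qed.

Lemma valx_rcons x a : valx p (rcons x a) = valx p x + a * (Posz p) ^+ (size x).
Proof.
elim: x => [|b x IH] /=; first by rewrite mulr0 addr0 add0r mulr1.
rewrite IH exprS mulrDr addrA; congr (_ + _); by rewrite mulrCA.
Qed.

Lemma valx_dif l (U W : l.-tuple 'I_p) :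
  valx p (dif U W) = (wordnum U)%:Z - (wordnum W)%:Z.
Proof.
elim: l U W => [|l IH] U W.
  by rewrite (tuple0 U) (tuple0 W) /= /wordnum !big_ord0.
have [U' [s ->]] := tuple_rcons _ U; have [W' [t ->]] := tuple_rcons _ W.
rewrite dif_rcons valx_rcons size_dif IH !wordnum_rcons !PoszD !PoszM PoszX.
set Y := (Posz p) ^+ l; nia.
Qed.

Lemma Pm_rcons (R : int -> 'M[K]_d) x a : Pm R (rcons x a) = Pm R x *m R a.
Proof.
elim: x => [|b x IH] /=; first by rewrite mulmx1 mul1mx.
by rewrite IH mulmxA.
Qed.

Definition tau : 'rV[K]_d := \row_i T i 0 [tuple] [tuple].

Lemma Tform (h1 : forall s t s' t' : 'I_p,
      (s : nat)%:Z - (t : nat)%:Z = (s' : nat)%:Z - (t' : nat)%:Z -> rho s t = rho s' t')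
  k l (U W : l.-tuple 'I_p) :
  T k l U W = (tau *m Pm (rhoD rho) (dif U W)) 0 k.
Proof.
elim: l k U W => [|l IH] k U W.
  by rewrite (tuple0 U) (tuple0 W) /= mulmx1 mxE.
have [U' [s ->]] := tuple_rcons _ U; have [W' [t ->]] := tuple_rcons _ W.
rewrite dif_rcons Pm_rcons mulmxA mxE rhoD_eq //.
have := hrho s t k l U' W'; rewrite /shift1 => ->.
by apply: eq_bigr => j _; rewrite IH mulrC.
Qed.

End Main.

Theorem mainTheorem11 (K : fieldType) (p d : nat) (hp : (0 < p)%N)
  (T : 'I_d -> Mfun K p)
  (hrec : forall k, isRec (T k))
  (hind : lin_indep T)
  (rho : 'I_p -> 'I_p -> 'M[K]_d)
  (hrho : forall (s t : 'I_p) (k : 'I_d) l U W,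
      shift1 s t (T k) l U W = \sum_(j < d) rho s t j k * T j l U W) :
  (forall k, toeplitz_type (T k)) <->
  ((forall s t s' t' : 'I_p,
      (s : nat)%:Z - (t : nat)%:Z = (s' : nat)%:Z - (t' : nat)%:Z ->
      rho s t = rho s' t') /\
   (forall s t : int,
      1 - (p : nat)%:Z <= s < 0 -> 1 - (p : nat)%:Z <= t < (p : nat)%:Z - 1 ->
      rhoD rho (s + (p : nat)%:Z) *m rhoD rho t = rhoD rho s *m rhoD rho (t + 1))).
Proof.
split.
  move=> toep.
  have h1 := cond1_of K p d hp T hind rho hrho toep.
  split=> // s t hs ht.
  have [a1 [b1 e1]] := pair_ex p hp (s + (p : nat)%:Z) ltac:(lia).
  have [a2 [b2 e2]] := pair_ex p hp t ltac:(lia).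
  have [a3 [b3 e3]] := pair_ex p hp s ltac:(lia).
  have [a4 [b4 e4]] := pair_ex p hp (t + 1) ltac:(lia).
  rewrite -e1 -e4 -e2 -e3 !(rhoD_eq K p d rho h1).
  apply: (two_of K p d hp T hind rho hrho toep).
  rewrite e1 e2 e3 e4; nia.
case=> h1 h2 k l U W U' W' e.
rewrite !(Tform K p d T rho hrho h1) !(PmC hp h2) ?(dif_ok p hp) //.
by rewrite !size_dif !(valx_dif p hp) e.
Qed.
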